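(* Let $G_1,G_2$ be cubic graphs. Every proper $3$-edge coloring $f$ of $G=G_1\,Y\,G_2$ (respectively $G=G_1\,H\,G_2$) can be written as $c_1\,Y\,d_1$ (respectively $c_1\,H\,d_1$), where $c_1$ is some proper $3$-edge coloring of $G_1$ and $d_1$ is some proper $3$-edge coloring of $G_2$.
   Context: Graphs are finite; multiple edges allowed, loops not. Proper $3$-edge colorings use colors $\{1,2,3\}$, adjacent edges receiving different colors. Composition Y: choose $v_1\in G_1$ with incident edges $x_j=v_1s_{1j}$ and $v_2\in G_2$ with incident edges $y_j=v_2s_{2j}$ ($j=1,2,3$); $G_1\,Y\,G_2$ deletes $v_1,v_2$ and adds edges $s_{1j}s_{2j}$ (the edge obtained by identifying $x_j$ with $y_j$). Composition H: choose edges $x=s_{11}s_{12}\in G_1$, $y=s_{21}s_{22}\in G_2$; $G_1\,H\,G_2$ deletes $x,y$ and adds $s_{11}s_{21},s_{12}s_{22}$. For proper $3$-edge colorings $c$ of $G_1$ and $d$ of $G_2$: let $\hat d$ be a coloring of $G_2$ obtained from $d$ by a global permutation of colors such that $\hat d(y_j)=c(x_j)$ for $j=1,2,3$; then $c\,Y\,d$ colors edges of $G_1-v_1$ by $c$, edges of $G_2-v_2$ by $\hat d$, and the edge $s_{1j}s_{2j}$ by $c(x_j)=\hat d(y_j)$. Similarly let $\tilde d$ be obtained from $d$ by a global color permutation with $\tilde d(y)=c(x)$; then $c\,H\,d$ colors edges of $G_1-x$ by $c$, edges of $G_2-y$ by $\tilde d$, and both new edges by $c(x)=\tilde d(y)$.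 *)

(* Defs.v *)
From HB Require Import structures.
From mathcomp Require Import all_boot all_order all_fingroup.
Set Implicit Arguments. Unset Strict Implicit. Unset Printing Implicit Defensive.

(* A finite multigraph: finite vertex type, finite edge type, and for each
   edge its (ordered) pair of endpoints.  Parallel edges are allowed;
   loops are excluded by the predicate [loopless]. *)
Record graph := Graph { gV : finType; gE : finType; gends : gE -> gV * gV }.

Definition inc (G : graph) (e : gE G) (v : gV G) : bool :=
  ((gends e).1 == v) || ((gends e).2 == v).

Definition loopless (G : graph) : Prop := forall e : gE G, (gends e).1 != (gends e).2.

Definition cubic (G : graph) : Prop :=
  loopless G /\ forall v : gV G, #|[set e : gE G | inc e v]| = 3.

Definition ends_are (G : graph) (e : gE G) (a b : gV G) : Prop :=
  gends e = (a, b) \/ gends e = (b, a).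

Definition adjacent (G : graph) (e e' : gE G) : Prop :=
  exists v : gV G, inc e v && inc e' v.

(* 3-edge colorings; the colors {1,2,3} are represented by 'I_3 *)
Definition coloring (G : graph) := gE G -> 'I_3.

Definition proper_coloring (G : graph) (c : coloring G) : Prop :=
  forall e e' : gE G, e != e' -> adjacent e e' -> c e != c e'.

Lemma ends1_avoid (G : graph) (v : gV G) (e : {e : gE G | ~~ inc e v}) :
  (gends (val e)).1 != v.
Proof. by case: e => e /=; rewrite /inc negb_or => /andP[]. Qed.

Lemma ends2_avoid (G : graph) (v : gV G) (e : {e : gE G | ~~ inc e v}) :
  (gends (val e)).2 != v.
Proof. by case: e => e /=; rewrite /inc negb_or => /andP[]. Qed.

(* Data: v1 in G1 with incident edges x j = v1 s1j, v2 in G2 with incident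
   edges y j = v2 s2j.  The s_ij are given as vertices different from v_i. *)
Section Ycomp.
Variables (G1 G2 : graph) (v1 : gV G1) (v2 : gV G2).
Variables (s1 : 'I_3 -> {u : gV G1 | u != v1}) (s2 : 'I_3 -> {u : gV G2 | u != v2}).

Definition YV : finType := ({u : gV G1 | u != v1} + {u : gV G2 | u != v2})%type.
Definition YE : finType :=
  ({e : gE G1 | ~~ inc e v1} + {e : gE G2 | ~~ inc e v2} + 'I_3)%type.

Definition Yends (e : YE) : YV * YV :=
  match e with
  | inl (inl e) => (inl (exist (fun u => u != v1) _ (ends1_avoid e)),
                     inl (exist (fun u => u != v1) _ (ends2_avoid e)))
  | inl (inr e) => (inr (exist (fun u => u != v2) _ (ends1_avoid e)),
                     inr (exist (fun u => u != v2) _ (ends2_avoid e)))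
  | inr j => (inl (s1 j), inr (s2 j))
  end.

Definition Ycomp : graph := @Graph YV YE Yends.
End Ycomp.

Definition is_Ycol (G1 G2 : graph) (v1 : gV G1) (v2 : gV G2)
  (x : 'I_3 -> gE G1) (y : 'I_3 -> gE G2)
  (s1 : 'I_3 -> {u : gV G1 | u != v1}) (s2 : 'I_3 -> {u : gV G2 | u != v2})
  (f : coloring (Ycomp s1 s2)) (c : coloring G1) (d : coloring G2) : Prop :=
  exists p : {perm 'I_3},
    [/\ forall j, p (d (y j)) = c (x j),
        forall e : {e : gE G1 | ~~ inc e v1}, f (inl (inl e)) = c (val e),
        forall e : {e : gE G2 | ~~ inc e v2}, f (inl (inr e)) = p (d (val e)) &
        forall j, f (inr j) = c (x j)].

(* Data: edge x = s11 s12 in G1 and y = s21 s22 in G2; new edges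
   ord0 = s11 s21 and ord_max = s12 s22. *)
Section Hcomp.
Variables (G1 G2 : graph) (x : gE G1) (y : gE G2).
Variables (s11 s12 : gV G1) (s21 s22 : gV G2).

Definition HV : finType := (gV G1 + gV G2)%type.
Definition HE : finType := ({e : gE G1 | e != x} + {e : gE G2 | e != y} + 'I_2)%type.

Definition Hends (e : HE) : HV * HV :=
  match e with
  | inl (inl e) => (inl (gends (val e)).1, inl (gends (val e)).2)
  | inl (inr e) => (inr (gends (val e)).1, inr (gends (val e)).2)
  | inr j => if val j == 0 then (inl s11, inr s21) else (inl s12, inr s22)
  end.

Definition Hcomp : graph := @Graph HV HE Hends.
End Hcomp.

Definition is_Hcol (G1 G2 : graph) (x : gE G1) (y : gE G2)
  (s11 s12 : gV G1) (s21 s22 : gV G2)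
  (f : coloring (Hcomp x y s11 s12 s21 s22)) (c : coloring G1) (d : coloring G2) : Prop :=
  exists p : {perm 'I_3},
    [/\ p (d y) = c x,
        forall e : {e : gE G1 | e != x}, f (inl (inl e)) = c (val e),
        forall e : {e : gE G2 | e != y}, f (inl (inr e)) = p (d (val e)) &
        forall j, f (inr j) = c x].

(* Main.v *)
Require Import Defs.
From HB Require Import structures.
From mathcomp Require Import all_boot all_order all_fingroup.
From mathcomp Require Import zify.
Set Implicit Arguments. Unset Strict Implicit.

Lemma eq_inl (A B : eqType) (a b : A) : (inl a == inl b :> A + B) = (a == b).
Proof. by []. Qed.
Lemma eq_inr (A B : eqType) (a b : B) : (inr a == inr b :> A + B) = (a == b).
Proof. by []. Qed.
Lemma eq_inlr (A B : eqType) (a : A) (b : B) : (inl a == inr b :> A + B) = false.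
Proof. by []. Qed.
Lemma eq_inrl (A B : eqType) (a : A) (b : B) : (inr b == inl a :> A + B) = false.
Proof. by []. Qed.
Lemma eq_ex (T : eqType) (P : pred T) a b (ha : P a) (hb : P b) :
  (exist (fun u => P u) a ha == exist (fun u => P u) b hb) = (a == b).
Proof. by []. Qed.

Definition LP (G : graph) (c : coloring G) (w : gV G) : Prop :=
  forall e e', e != e' -> inc e w -> inc e' w -> c e != c e'.

Lemma card_sum (T : finType) (P : pred T) : #|[set x | P x]| = \sum_x (P x : nat).
Proof.
rewrite -sum1_card big_mkcond /=; apply eq_bigr => x _; rewrite inE; by case: (P x).
Qed.

Lemma surj3 (G : graph) (c : coloring G) (w : gV G) :
  #|[set e | inc e w]| = 3 -> LP c w -> forall a, exists2 e, inc e w & c e = a.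
Proof.
move=> h3 hl a.
have inj : {in [set e | inc e w] &, injective c}.
  move=> e e'; rewrite !inE => he he' hc; apply/eqP/negPn/negP => ne.
  by move: (hl _ _ ne he he'); rewrite hc eqxx.
have : c @: [set e | inc e w] = [set: 'I_3].
  apply/eqP; rewrite eqEcard subsetT cardsT card_ord card_in_imset // h3 //.
move=> /setP /(_ a); rewrite inE => /imsetP [e]; rewrite inE => he ->.
by exists e.
Qed.

Lemma one_col (G : graph) (c : coloring G) (w : gV G) :
  #|[set e | inc e w]| = 3 -> LP c w -> forall a, #|[set e | inc e w && (c e == a)]| = 1.
Proof.
move=> h3 hl a; have [e he hca] := surj3 h3 hl a.
have -> : [set e | inc e w && (c e == a)] = [set e].
  apply/setP => e'; rewrite !inE; apply/idP/idP.
    case/andP => he' /eqP hc; apply/negPn/negP => ne.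
    by have := hl _ _ ne he' he; rewrite hc hca eqxx.
  by move/eqP ->; rewrite he hca eqxx.
by rewrite cards1.
Qed.

Lemma sum_pred1 (T : finType) (v p : T) :
  \sum_(w : T) ((w != v) && (w == p) : nat) = (p != v).
Proof.
rewrite (bigD1 p) //= eqxx andbT big1 ?addn0 // => w /negbTE ->; by rewrite andbF.
Qed.

Lemma key (G : graph) (c : coloring G) (v : gV G) :
  loopless G -> (forall w : gV G, #|[set e | inc e w]| = 3) ->
  (forall w : gV G, w != v -> LP c w) -> LP c v.
Proof.
move=> hloop h3 hlp.
pose K := \sum_(w : gV G) ((w != v) : nat).
pose n a := \sum_(e : gE G) (@inc G e v && (c e == a) : nat).
pose m a := \sum_(e : gE G) ((c e == a) : nat).
have hpar : forall a, K + n a = 2 * m a.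
  move=> a.
  have E : \sum_(w : gV G) \sum_(e : gE G) ((w != v) && @inc G e w && (c e == a) : nat) = K.
    apply eq_bigr => w _.
    case: (boolP (w != v)) => hw.
      apply: (etrans _ (one_col (h3 w) (hlp w hw) a)).
      rewrite card_sum; apply eq_bigr => e _.
      by [].
    by rewrite big1 // => e _; rewrite (negbTE hw).
  rewrite -E exchange_big /= /n /m big_distrr /= -big_split /=.
  apply eq_bigr => e _.
  have hne := hloop e.
  have -> : \sum_(w : gV G) ((w != v) && @inc G e w && (c e == a) : nat)
     = (c e == a) * (((gends e).1 != v) + ((gends e).2 != v)).
    case: (c e == a); last by rewrite big1 // => w _; rewrite andbF.
    rewrite mul1n -!sum_pred1 -big_split /=; apply eq_bigr => w _.
    rewrite /inc andbT.
    rewrite [(gends e).1 == w]eq_sym [(gends e).2 == w]eq_sym.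
    have : ~~ ((w == (gends e).1) && (w == (gends e).2)).
      by apply: contra hne => /andP[/eqP <- /eqP <-].
    by case: (w == v); case: (w == (gends e).1); case: (w == (gends e).2).
  rewrite /inc; case: (c e == a); rewrite ?andbF ?muln0 ?mul1n ?muln1 //.
  move: hne; case: ((gends e).1 =P v) => [->|_]; case: ((gends e).2 =P v) => [->|_] //=.
  by rewrite eqxx.
have hs : \sum_(a < 3) n a = 3.
  apply: (etrans _ (h3 v)).
  rewrite /n exchange_big /= card_sum; apply eq_bigr => e _.
  case: (@inc G e v) => /=; last by rewrite big1.
  rewrite (bigD1 (c e)) //= eqxx big1 // => a /negbTE; rewrite eq_sym => ->; done.
rewrite !big_ord_recl big_ord0 addn0 in hs.
move: (hpar ord0) (hpar (lift ord0 ord0)) (hpar (lift ord0 (lift ord0 ord0))) => p0 p1 p2.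
have hn1 : forall a, n a = 1.
  move=> a.
  have : (a == ord0) || (a == lift ord0 ord0) || (a == lift ord0 (lift ord0 ord0)).
    by case: a => [[|[|[|k]]] hk].
  case/orP => [/orP[]|] /eqP ->; lia.
move=> e e' ne he he'; apply/negP => /eqP hc.
have := hn1 (c e); rewrite /n -card_sum => h1.
have : #|[set e; e']| <= 1.
  rewrite -h1; apply: subset_leq_card; apply/subsetP => z; rewrite !inE.
  by case/orP => /eqP ->; rewrite ?he ?he' ?hc eqxx.
by rewrite cards2 ne.
Qed.

Lemma Ypart : forall (G1 G2 : graph), cubic G1 -> cubic G2 ->
   forall (v1 : gV G1) (v2 : gV G2) (x : 'I_3 -> gE G1) (y : 'I_3 -> gE G2)
          (s1 : 'I_3 -> {u : gV G1 | u != v1}) (s2 : 'I_3 -> {u : gV G2 | u != v2}),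
     injective x -> injective y ->
     (forall e : gE G1, inc e v1 <-> exists j, e = x j) ->
     (forall e : gE G2, inc e v2 <-> exists j, e = y j) ->
     (forall j, ends_are (x j) v1 (val (s1 j))) ->
     (forall j, ends_are (y j) v2 (val (s2 j))) ->
     forall f : coloring (Ycomp s1 s2), proper_coloring f ->
     exists (c1 : coloring G1) (d1 : coloring G2),
       [/\ proper_coloring c1, proper_coloring d1 & is_Ycol x y f c1 d1].
Proof.
move=> G1 G2 [l1 dg1] [l2 dg2] v1 v2 x y s1 s2 ix iy hx hy ex ey f hf.
pose im1 (e : gE G1) : gE (Ycomp s1 s2) :=
  if insub e is Some E then inl (inl E)
  else if [pick j | x j == e] is Some j then inr j else inr ord0.
pose im2 (e : gE G2) : gE (Ycomp s1 s2) :=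
  if insub e is Some E then inl (inr E)
  else if [pick j | y j == e] is Some j then inr j else inr ord0.
have im1_out : forall E : {e : gE G1 | ~~ inc e v1}, im1 (val E) = inl (inl E).
  by move=> E; rewrite /im1 valK.
have im2_out : forall E : {e : gE G2 | ~~ inc e v2}, im2 (val E) = inl (inr E).
  by move=> E; rewrite /im2 valK.
have im1_x : forall j, im1 (x j) = inr j.
  move=> j; rewrite /im1 insubF; last by apply/negbF; apply/hx; exists j.
  by case: pickP => [k /eqP /ix -> | /(_ j)]; rewrite ?eqxx.
have im2_y : forall j, im2 (y j) = inr j.
  move=> j; rewrite /im2 insubF; last by apply/negbF; apply/hy; exists j.
  by case: pickP => [k /eqP /iy -> | /(_ j)]; rewrite ?eqxx.
have cs1 : forall e, (exists E, e = val E /\ im1 e = inl (inl E)) \/ (exists j, e = x j /\ im1 e = inr j).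
  move=> e; case: (boolP (inc e v1)) => h.
    by have [j ->] := (proj1 (hx e) h); right; exists j; rewrite im1_x.
  by left; exists (exist _ e h); rewrite -im1_out.
have cs2 : forall e, (exists E, e = val E /\ im2 e = inl (inr E)) \/ (exists j, e = y j /\ im2 e = inr j).
  move=> e; case: (boolP (inc e v2)) => h.
    by have [j ->] := (proj1 (hy e) h); right; exists j; rewrite im2_y.
  by left; exists (exist _ e h); rewrite -im2_out.
have inj1 : injective im1.
  move=> e e'; case: (cs1 e) => [[E [-> ->]]|[j [-> ->]]];
    case: (cs1 e') => [[E' [-> ->]]|[j' [-> ->]]] // [].
  - by move=> ->.
  - by move=> ->.
have inj2 : injective im2.
  move=> e e'; case: (cs2 e) => [[E [-> ->]]|[j [-> ->]]];
    case: (cs2 e') => [[E' [-> ->]]|[j' [-> ->]]] // [].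
  - by move=> ->.
  - by move=> ->.
have adj1 : forall e w (hw : w != v1), inc e w ->
    inc (im1 e) (inl (exist (fun u => u != v1) w hw) : gV (Ycomp s1 s2)).
  move=> e w hw; case: (cs1 e) => [[E [-> ->]]|[j [-> ->]]].
    by rewrite /inc /= !eq_inl !eq_ex.
  rewrite /inc /= eq_inl eq_inrl orbF -val_eqE /=.
  by case: (ex j) => -> /=; rewrite [v1 == w]eq_sym (negbTE hw) ?orbF.
have adj2 : forall e w (hw : w != v2), inc e w ->
    inc (im2 e) (inr (exist (fun u => u != v2) w hw) : gV (Ycomp s1 s2)).
  move=> e w hw; case: (cs2 e) => [[E [-> ->]]|[j [-> ->]]].
    by rewrite /inc /= !eq_inr !eq_ex.
  rewrite /inc /= ?eq_inr -val_eqE /=.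
  by case: (ey j) => -> /=; rewrite [v2 == w]eq_sym (negbTE hw) ?orbF.
exists (fun e => f (im1 e)), (fun e => f (im2 e)); split.
- move=> e e' ne [w /andP [he he']].
  have : LP (fun e => f (im1 e)) v1.
    apply: key => // w' hw' a b nab ha hb; apply: hf.
      by apply: contra nab => /eqP /inj1 ->.
    by exists (inl (exist _ w' hw')); rewrite !adj1.
  case: (w =P v1) => [<-|/eqP hw]; first by apply.
  move=> _; apply: hf; first by apply: contra ne => /eqP /inj1 ->.
  by exists (inl (exist _ w hw)); rewrite !adj1.
- move=> e e' ne [w /andP [he he']].
  have : LP (fun e => f (im2 e)) v2.
    apply: key => // w' hw' a b nab ha hb; apply: hf.
      by apply: contra nab => /eqP /inj2 ->.
    by exists (inr (exist _ w' hw')); rewrite !adj2.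
  case: (w =P v2) => [<-|/eqP hw]; first by apply.
  move=> _; apply: hf; first by apply: contra ne => /eqP /inj2 ->.
  by exists (inr (exist _ w hw)); rewrite !adj2.
exists 1%g; split.
- by move=> j; rewrite perm1 im1_x im2_y.
- by move=> E; rewrite im1_out.
- by move=> E; rewrite perm1 im2_out.
- by move=> j; rewrite im1_x.
Qed.

Lemma Hpart : forall (G1 G2 : graph), cubic G1 -> cubic G2 ->
   forall (x : gE G1) (y : gE G2) (s11 s12 : gV G1) (s21 s22 : gV G2),
     ends_are x s11 s12 -> ends_are y s21 s22 ->
     forall f : coloring (Hcomp x y s11 s12 s21 s22), proper_coloring f ->
     exists (c1 : coloring G1) (d1 : coloring G2),
       [/\ proper_coloring c1, proper_coloring d1 & is_Hcol f c1 d1].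
Proof.
move=> G1 G2 [l1 dg1] [l2 dg2] x y s11 s12 s21 s22 ex ey f hf.
pose o0 : 'I_2 := ord0. pose o1 : 'I_2 := ord_max.
pose im1 (e : gE G1) : gE (Hcomp x y s11 s12 s21 s22) :=
  if insub e is Some E then inl (inl E) else inr o0.
pose im2 (e : gE G2) : gE (Hcomp x y s11 s12 s21 s22) :=
  if insub e is Some E then inl (inr E) else inr o0.
have im1_out : forall E : {e : gE G1 | e != x}, im1 (val E) = inl (inl E).
  by move=> E; rewrite /im1 valK.
have im2_out : forall E : {e : gE G2 | e != y}, im2 (val E) = inl (inr E).
  by move=> E; rewrite /im2 valK.
have im1_x : im1 x = inr o0 by rewrite /im1 insubF ?eqxx.
have im2_y : im2 y = inr o0 by rewrite /im2 insubF ?eqxx.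
have cs1 : forall e, (exists E, e = val E /\ im1 e = inl (inl E)) \/ (e = x /\ im1 e = inr o0).
  move=> e; case: (e =P x) => [->|/eqP h]; first by right.
  by left; exists (exist _ e h); rewrite -im1_out.
have cs2 : forall e, (exists E, e = val E /\ im2 e = inl (inr E)) \/ (e = y /\ im2 e = inr o0).
  move=> e; case: (e =P y) => [->|/eqP h]; first by right.
  by left; exists (exist _ e h); rewrite -im2_out.
have inj1 : injective im1.
  move=> e e'; case: (cs1 e) => [[E [-> ->]]|[-> ->]];
    case: (cs1 e') => [[E' [-> ->]]|[-> ->]] //.
  by case=> ->.
have inj2 : injective im2.
  move=> e e'; case: (cs2 e) => [[E [-> ->]]|[-> ->]];
    case: (cs2 e') => [[E' [-> ->]]|[-> ->]] //.
  by case=> ->.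
have adj1 : forall e w, w != s12 -> inc e w ->
    inc (im1 e) (inl w : gV (Hcomp x y s11 s12 s21 s22)).
  move=> e w hw; case: (cs1 e) => [[E [-> ->]]|[-> ->]].
    by rewrite /inc /= ?eq_inl.
  rewrite /inc /= ?eq_inl ?eq_inrl ?orbF.
  by case: ex => -> /=; rewrite [s12 == w]eq_sym (negbTE hw) ?orbF.
have adj2 : forall e w, w != s22 -> inc e w ->
    inc (im2 e) (inr w : gV (Hcomp x y s11 s12 s21 s22)).
  move=> e w hw; case: (cs2 e) => [[E [-> ->]]|[-> ->]].
    by rewrite /inc /= ?eq_inr.
  rewrite /inc /= ?eq_inr ?eq_inlr /=.
  by case: ey => -> /=; rewrite [s22 == w]eq_sym (negbTE hw) ?orbF.
have LP1 : forall w, LP (fun e => f (im1 e)) w.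
  suff h : forall w, w != s12 -> LP (fun e => f (im1 e)) w.
    move=> w; case: (w =P s12) => [->|/eqP]; last exact: h.
    exact: key.
  move=> w hw a b nab ha hb; apply: hf.
    by apply: contra nab => /eqP /inj1 ->.
  by exists (inl w); rewrite !adj1.
have LP2 : forall w, LP (fun e => f (im2 e)) w.
  suff h : forall w, w != s22 -> LP (fun e => f (im2 e)) w.
    move=> w; case: (w =P s22) => [->|/eqP]; last exact: h.
    exact: key.
  move=> w hw a b nab ha hb; apply: hf.
    by apply: contra nab => /eqP /inj2 ->.
  by exists (inr w); rewrite !adj2.
have hc1 : f (inr o1) = f (im1 x).
  have [e he hce] := surj3 (dg1 s12) (LP1 s12) (f (inr o1)).
  case: (cs1 e) => [[E [hE hi]]|[hx _]]; last by move: hce; rewrite hx.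
  rewrite hi in hce.
  have : f (inl (inl E)) != f (inr o1).
    apply: hf => //; exists (inl s12); rewrite /inc /= ?eq_inl ?eqxx ?orbT //.
    by rewrite andbT; move: he; rewrite hE.
  by rewrite hce eqxx.
exists (fun e => f (im1 e)), (fun e => f (im2 e)); split.
- by move=> e e' ne [w /andP [he he']]; apply: (LP1 w).
- by move=> e e' ne [w /andP [he he']]; apply: (LP2 w).
exists 1%g; split.
- by rewrite perm1 im1_x im2_y.
- by move=> E; rewrite im1_out.
- by move=> E; rewrite perm1 im2_out.
- move=> j; have : (j == o0) || (j == o1) by case: j => [[|[|k]] hk].
  by case/orP => /eqP ->; rewrite ?hc1 // im1_x.
Qed.

Theorem theorem8 :
  (* Composition Y *)
  (forall (G1 G2 : graph), cubic G1 -> cubic G2 ->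
   forall (v1 : gV G1) (v2 : gV G2) (x : 'I_3 -> gE G1) (y : 'I_3 -> gE G2)
          (s1 : 'I_3 -> {u : gV G1 | u != v1}) (s2 : 'I_3 -> {u : gV G2 | u != v2}),
     injective x -> injective y ->
     (forall e : gE G1, inc e v1 <-> exists j, e = x j) ->
     (forall e : gE G2, inc e v2 <-> exists j, e = y j) ->
     (forall j, ends_are (x j) v1 (val (s1 j))) ->
     (forall j, ends_are (y j) v2 (val (s2 j))) ->
     forall f : coloring (Ycomp s1 s2), proper_coloring f ->
     exists (c1 : coloring G1) (d1 : coloring G2),
       [/\ proper_coloring c1, proper_coloring d1 & is_Ycol x y f c1 d1])
  /\
  (* Composition H *)
  (forall (G1 G2 : graph), cubic G1 -> cubic G2 ->
   forall (x : gE G1) (y : gE G2) (s11 s12 : gV G1) (s21 s22 : gV G2),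
     ends_are x s11 s12 -> ends_are y s21 s22 ->
     forall f : coloring (Hcomp x y s11 s12 s21 s22), proper_coloring f ->
     exists (c1 : coloring G1) (d1 : coloring G2),
       [/\ proper_coloring c1, proper_coloring d1 & is_Hcol f c1 d1]).
Proof. split; [exact: Ypart | exact: Hpart]. Qed.
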